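(* Let $\mathcal S$ be a trajectory set with $\mathcal M_0\neq\emptyset$. Then $\bar\sigma(0)\ge0$, and for every financial position $f:\mathcal S\to[-\infty,+\infty]$, $$\sup_{Q\in\mathcal M_0}E_Q^*[f]\le\bar\sigma(f)\le\|f\|.$$ Moreover, for every $Q\in\mathcal M_0$ one has $\mathcal L^1_{(K)}\subseteq\mathcal L^1(\mathcal S,\bar{\mathfrak A}_Q,Q)$ and $\int_{(K)}f=E_Q[f]$ for every $f\in\mathcal L^1_{(K)}$.
   Context: Fix $s_0\in\mathbb R$. A trajectory set is any set $\mathcal S$ of real sequences $S=(S_j)_{j\in\mathbb N_0}$ with $S_0=s_0$. A simple portfolio $(V,n,H)$ consists of $V\in\mathbb R$, $n\in\mathbb N$ and nonanticipating $H_i:\mathcal S\to\mathbb R$, $0\le i\le n-1$ (i.e. $H_i(S)=h_i(S_0,\dots,S_i)$ for arbitrary, not necessarily measurable, $h_i:\mathbb R^{i+1}\to\mathbb R$), with wealth $\Pi^{V,n,H}_j(S)=V+\sum_{i=0}^{\min\{j,n\}-1}H_i(S)(S_{i+1}-S_i)$ and $\Pi^{V,n,H}_\infty:=\Pi^{V,n,H}_n$; positive if $V\ge0$ and $\Pi^{V,n,H}_\infty\ge0$ on $\mathcal S$. A generalized portfolio is a sequence $(V_m,n_m,H_m)_{m\in\mathbb N_0}$ of simple portfolios, positive for $m\ge1$; positive generalized if moreover $\Pi^{V_0,n_0,H_0}_j\equiv0$ for all $j$. It superhedges $f:\mathcal S\to[-\infty,+\infty]$ with initial endowment $\sum_{m=0}^\infty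 V_m$ if $f\le\sum_{m=0}^\infty\Pi^{V_m,n_m,H_m}_\infty$ on $\mathcal S$. For $f\ge0$, $\bar I(f)$ is the infimum of initial endowments of positive generalized portfolios superhedging $f$; $\bar\sigma(f)$ is the infimum of initial endowments of generalized portfolios superhedging $f$; $\|f\|:=\bar I(|f|)$. Let $\mathcal L^1_{(K)}$ be the set of real-valued $f$ with $-\bar\sigma(-f)=\bar\sigma(f)\in\mathbb R$, and $\int_{(K)}f:=\bar\sigma(f)$ for such $f$. Let $\mathfrak A$ be the trace on $\mathcal S$ of the product Borel $\sigma$-field of $\mathbb R^{\mathbb N_0}$, $T_i(S)=S_i$ the coordinate process, and $\mathcal F_i=\sigma(T_0,\dots,T_i)$. A martingale measure is a probability $Q$ on $(\mathcal S,\mathfrak A)$ under which $(T_i)_{i\ge0}$ is a martingale w.r.t. $(\mathcal F_i)$. It has finite support at finite maturities if there is $\mathcal S'\in\mathfrak A$ with $Q(\mathcal S')=1$ such that for every $j\in\mathbb N_0$ the set of nodes $\{\mathcal S_{(S,j)}:S\in\mathcal S'\}$ is finite, where $\mathcal S_{(S,j)}=\{\tilde S\in\mathcal S:(\tilde S_0,\dots,\tilde S_j)=(S_0,\dots,S_j)\}$. $\mathcal M_0$ is the set of such martingale measures. $\bar{\mathfrak A}_Q$ is the $Q$-completion of $\mathfrak A$, $E_Q$ the expectation, and $E_Q^*[f]=\inf\{E_Q[h]: h\ \bar{\mathfrak A}_Q\text{-measurable},\ f\le h\text{ on }\mathcal S,\ E_Q[h]\text{ exists in }[-\infty,+\infty]\}$.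 *)

(* Defs.v *)
From HB Require Import structures.
From mathcomp Require Import all_boot all_order all_algebra.
From mathcomp Require Import all_classical all_reals all_analysis.
From mathcomp Require Import measurable_realfun.

Set Implicit Arguments.
Unset Strict Implicit.
Unset Printing Implicit Defensive.

Import Order.TTheory GRing.Theory Num.Theory.
Local Open Scope classical_set_scope.
Local Open Scope ring_scope.

Section Portfolios.
Variable R : realType.

Definition prefix (x : nat -> R) (i : nat) : seq R := [seq x k | k <- iota 0 i.+1].

(* A simple portfolio (V, n, H): V real, n in N = {1,2,...}, and
   H_i(S) = h_i(S_0,...,S_i) for arbitrary h_i : R^{i+1} -> R
   (represented as a function on the list (S_0,...,S_i)). *)
Record sportfolio := SPortfolio {
  pV : R;
  pn : nat;
  pn_gt0 : (0 < pn)%N;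
  ph : nat -> seq R -> R }.

Definition wealth (P : sportfolio) (j : nat) (x : nat -> R) : R :=
  pV P + \sum_(0 <= i < minn j (pn P)) ph P i (prefix x i) * (x i.+1 - x i).

Definition wealth_inf (P : sportfolio) (x : nat -> R) : R := wealth P (pn P) x.

End Portfolios.

(* The elements of the trajectory set S; the extra argument p is a point of S
   (only used to equip the type with the pointed structure required by
   MathComp-Analysis' measurable types). *)
Definition trajT (R : realType) (S : set (nat -> R)) (p : {y | S y}) : Type :=
  {y | S y}.

HB.instance Definition _ (R : realType) (S : set (nat -> R)) (p : {y | S y}) :=
  gen_eqMixin (trajT p).
HB.instance Definition _ (R : realType) (S : set (nat -> R)) (p : {y | S y}) :=
  gen_choiceMixin (trajT p).
HB.instance Definition _ (R : realType) (S : set (nat -> R)) (p : {y | S y}) :=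
  isPointed.Build (trajT p) p.

Definition coord (R : realType) (S : set (nat -> R)) (p : {y | S y})
  (i : nat) (x : trajT p) : R := proj1_sig x i.
Arguments coord {R S} p i x.

(* generators: sets T_i^{-1}(B), B Borel.  The generated sigma-algebra
   sigma(T_i, i in N_0) is the trace on S of the product Borel sigma-field. *)
Definition coord_gen (R : realType) (S : set (nat -> R)) (p : {y | S y})
  : set (set (trajT p)) :=
  [set A | exists i (B : set R), measurable B /\ A = coord p i @^-1` B].
Arguments coord_gen {R S} p.

Definition Traj (R : realType) (S : set (nat -> R)) (p : {y | S y}) :=
  g_sigma_algebraType (coord_gen p).
Arguments Traj {R S} p.

Definition filtr (R : realType) (S : set (nat -> R)) (p : {y | S y}) (i : nat)
  : set (set (Traj p)) :=
  <<s [set A | exists j (B : set R),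
          (j <= i)%N /\ measurable B /\ A = coord p j @^-1` B] >>.
Arguments filtr {R S} p i.

Section Completion.
Local Open Scope ereal_scope.
Context d (U : measurableType d) (R : realType) (mu : measure U R).
Local Notation I := (caratheodory_type (mu^*)%mu).
Local Notation mub := (completed_measure_extension (mu:=mu)).

Definition cmeasurable (h : U -> \bar R) : Prop :=
  measurable_fun [set: I] (h : I -> \bar R).

Definition cexpect (h : U -> \bar R) : \bar R := \int[mub]_x ((h : I -> \bar R) x).

Definition cexpect_exists (h : U -> \bar R) : Prop :=
  ~ (\int[mub]_x ((h : I -> \bar R)^\+ x) = +oo /\
     \int[mub]_x ((h : I -> \bar R)^\- x) = +oo).

Definition cintegrable (h : U -> \bar R) : Prop :=
  mub.-integrable [set: I] (h : I -> \bar R).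
End Completion.

Section Hedging.
Local Open Scope ereal_scope.
Variables (R : realType) (S : set (nat -> R)) (p : {y | S y}).
Notation T := (Traj p).

Definition positive_sp (P : sportfolio R) : Prop :=
  (0 <= pV P)%R /\ forall x : T, (0 <= wealth_inf P (proj1_sig x))%R.

Definition gen_portfolio (P : nat -> sportfolio R) : Prop :=
  forall m, (0 < m)%N -> positive_sp (P m).

Definition pos_gen_portfolio (P : nat -> sportfolio R) : Prop :=
  gen_portfolio P /\ forall j (x : T), wealth (P 0%N) j (proj1_sig x) = 0%R.

Definition endowment (P : nat -> sportfolio R) : \bar R :=
  \sum_(m <oo) (pV (P m))%:E.

Definition superhedges (P : nat -> sportfolio R) (f : T -> \bar R) : Prop :=
  forall x : T, f x <= \sum_(m <oo) (wealth_inf (P m) (proj1_sig x))%:E.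

Definition Ibar (f : T -> \bar R) : \bar R :=
  ereal_inf [set e | exists P, pos_gen_portfolio P /\ superhedges P f
                              /\ e = endowment P].

Definition sigmabar (f : T -> \bar R) : \bar R :=
  ereal_inf [set e | exists P, gen_portfolio P /\ superhedges P f
                              /\ e = endowment P].

Definition knorm (f : T -> \bar R) : \bar R := Ibar (fun x => `|f x|).

Definition L1K : set (T -> R) :=
  [set f | - sigmabar (fun x => (- f x)%:E) = sigmabar (fun x => (f x)%:E)
           /\ sigmabar (fun x => (f x)%:E) \is a fin_num].

Definition intK (f : T -> R) : \bar R := sigmabar (fun x => (f x)%:E).

Definition martingale_measure (Q : probability T R) : Prop :=
  forall i : nat,
    Q.-integrable setT (fun x : T => (coord p i x)%:E) /\
    forall A, filtr p i A ->
      \int[Q]_(x in A) (coord p i.+1 x)%:E = \int[Q]_(x in A) (coord p i x)%:E.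

Definition node (j : nat) (x : T) : set T :=
  [set y : T | forall k, (k <= j)%N -> proj1_sig y k = proj1_sig x k].

Definition finite_support (Q : probability T R) : Prop :=
  exists S' : set T, measurable S' /\ Q S' = 1 /\
    forall j : nat, finite_set [set node j x | x in S'].

Definition M0 : set (probability T R) :=
  [set Q | martingale_measure Q /\ finite_support Q].

(* completion (S, \bar{\mathfrak A}_Q, Q): MathComp-Analysis' completed
   measure extension of Q (Caratheodory sigma-algebra of the outer measure
   mu_ext Q), see section Completion below. *)
Definition Abar_measurable (Q : probability T R) (h : T -> \bar R) : Prop :=
  cmeasurable Q h.
Definition EQ (Q : probability T R) (h : T -> \bar R) : \bar R :=
  cexpect Q h.
Definition EQ_exists (Q : probability T R) (h : T -> \bar R) : Prop :=
  cexpect_exists Q h.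

Definition EQstar (Q : probability T R) (f : T -> \bar R) : \bar R :=
  ereal_inf [set EQ Q h | h in [set h | Abar_measurable Q h /\
                                  (forall x, f x <= h x) /\ EQ_exists Q h]].

Definition L1Q (Q : probability T R) (f : T -> R) : Prop :=
  cintegrable Q (fun x => (f x)%:E).

End Hedging.

Arguments Ibar {R S} p f.
Arguments sigmabar {R S} p f.
Arguments knorm {R S} p f.
Arguments L1K {R S} p.
Arguments intK {R S} p f.
Arguments M0 {R S} p.
Arguments EQstar {R S p} Q f.
Arguments EQ {R S p} Q h.
Arguments L1Q {R S p} Q f.

(* Main.v *)
Require Import Defs.
From HB Require Import structures.
From mathcomp Require Import all_boot all_order all_algebra.
From mathcomp Require Import all_classical all_reals all_analysis.
From mathcomp Require Import measurable_realfun.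
From mathcomp Require Import lra.
Import Order.TTheory GRing.Theory Num.Theory.
Local Open Scope classical_set_scope.
Local Open Scope ring_scope.
Local Open Scope ereal_scope.

Section Basics.
Variables (R : realType) (S : set (nat -> R)) (p : {y | S y}).
Notation T := (Traj p).

Lemma coord_measurable i : measurable_fun setT (Defs.coord p i : T -> R).
Proof. by move=> _ B mB; rewrite setTI; apply: sub_sigma_algebra; exists i, B. Qed.

Definition pre i (x : T) : seq R := Defs.prefix (proj1_sig x) i.

Lemma pre_setE i v : [set x : T | pre i x = v] =
  if size v == i.+1 then \bigcap_(k in [set k | (k < i.+1)%N]) (Defs.coord p k @^-1` [set nth 0%R v k])
  else set0.
Proof.
apply/seteqP; split => x.
  move=> <-; rewrite /pre /Defs.prefix size_map size_iota eqxx => k ki.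
  change (sval x k = nth 0%R [seq sval x k0 | k0 <- iota 0 i.+1] k).
  by rewrite (nth_map 0%N) ?size_iota // nth_iota.
case: ifPn => [/eqP sv H|//]; apply: (@eq_from_nth _ 0%R).
  by rewrite /pre /Defs.prefix size_map size_iota.
move=> k; rewrite /pre /Defs.prefix size_map size_iota => ki.
by rewrite (nth_map 0%N) ?size_iota // nth_iota // add0n; have := H k ki.
Qed.

Lemma finite_lt n : finite_set [set k | (k < n)%N].
Proof. exact: finite_II. Qed.

Lemma pre_measurable i v : measurable [set x : T | pre i x = v].
Proof.
rewrite pre_setE; case: ifP => _ //.
apply: fin_bigcap_measurable; first exact: finite_lt.
by move=> k _; rewrite -[X in measurable X]setTI; apply: coord_measurable.
Qed.

Lemma pre_filtr i v : filtr p i [set x : T | pre i x = v].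
Proof.
pose G := [set A : set T | exists j (B : set R),
          (j <= i)%N /\ measurable B /\ A = Defs.coord p j @^-1` B].
suff : measurable ([set x : T | pre i x = v] : set (g_sigma_algebraType G)) by [].
rewrite pre_setE; case: ifP => _ //.
apply: fin_bigcap_measurable; first exact: finite_lt.
move=> k /= ki; apply: sub_sigma_algebra; exists k, [set nth 0%R v k]; split => //.
Qed.

End Basics.
Arguments pre {R S p} i x.
Arguments pre_measurable {R S p} i v.
Arguments pre_filtr {R S p} i v.
Arguments coord_measurable {R S p} i.

Section Gen.
Variable R : realType.

Lemma eseries_shift (u : nat -> \bar R) : (forall k, 0 <= u k.+1) ->
  u 0%N \is a fin_num -> \sum_(m <oo) u m = u 0%N + \sum_(k <oo) u k.+1.
Proof.
move=> u0 fu; apply: cvg_lim => //.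
have cv : cvgn (fun n => (\sum_(0 <= i < n) u i.+1)%R).
  by apply: is_cvg_nneseries => n _ _; exact: u0.
rewrite -cvg_shiftS /=.
have -> : (fun n => (\sum_(0 <= i < n.+1) u i)%R) =
          (fun n => u 0%N + (\sum_(0 <= i < n) u i.+1)%R).
  by apply/funext => n; rewrite big_nat_recl.
apply: cvgeD.
- exact: fin_num_adde_defr.
- exact: cvg_cst.
- exact: cv.
Qed.

Lemma measurable_mem_set d (T : measurableType d) (A : set T) :
  measurable A -> measurable_fun setT (fun x => x \in A).
Proof.
move=> mA _ B _; rewrite setTI.
have mc (b : bool) : measurable [set _ : T | B b].
  case: (pselect (B b)) => H.
    by rewrite (_ : [set _ | _] = setT) //; apply/seteqP; split.
  by rewrite (_ : [set _ | _] = set0) //; apply/seteqP; split.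
rewrite (_ : _ @^-1` _ = (A `&` [set _ | B true]) `|` (~` A `&` [set _ | B false])).
  apply: measurableU; apply: measurableI => //; exact: measurableC.
apply/seteqP; split => x /=.
  by case: (boolP (x \in A)) => /[dup] xA; rewrite ?in_setE ?notin_setE => xA' Bx;
    [left|right].
by case=> -[xA Bb]; [rewrite mem_set|rewrite memNset].
Qed.

End Gen.

Section Port.
Variables (R : realType) (S : set (nat -> R)) (p : {y | S y}).
Notation T := (Traj p).
Notation crd := (Defs.coord p).
Variable Q : probability T R.
Hypothesis mart : forall i : nat,
    Q.-integrable setT (fun x : T => (crd i x)%:E) /\
    forall A, filtr p i A ->
      \int[Q]_(x in A) (crd i.+1 x)%:E = \int[Q]_(x in A) (crd i x)%:E.
Variable S' : set T.
Hypothesis mS' : measurable S'.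
Hypothesis QS' : Q S' = 1.
Hypothesis finS' : forall j : nat, finite_set [set node j x | x in S'].

Lemma QnS : Q (~` S') = 0.
Proof. by rewrite probability_setC // QS' subee. Qed.

Lemma int_restrict (B : set T) (g : T -> \bar R) : measurable B ->
  Q.-integrable setT g ->
  \int[Q]_(x in S' `&` B) g x = \int[Q]_(x in B) g x.
Proof.
move=> mB ig.
rewrite (@negligible_integral _ _ _ Q B (~` S')) //.
- by rewrite setDE setCK setIC.
- exact: measurableC.
- by apply: (integrableS measurableT) => //.
- exact: QnS.
Qed.

Definition Delta i (x : T) : R := (crd i.+1 x - crd i x)%R.

Lemma Delta_int i : Q.-integrable setT (fun x => (Delta i x)%:E).
Proof.
apply: (@eq_integrable _ _ _ Q setT measurableT (fun x => (crd i.+1 x)%:E - (crd i x)%:E)).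
  by move=> x _; rewrite /Delta EFinB.
apply: integrableB => //; [exact: (mart i.+1).1 | exact: (mart i).1].
Qed.

Lemma mart0 i B : filtr p i B -> measurable B ->
  \int[Q]_(x in B) (Delta i x)%:E = 0.
Proof.
move=> fB mB; rewrite /Delta.
under eq_integral do rewrite EFinB.
rewrite integralB_EFin //; last 2 first.
- by apply: (integrableS measurableT) => //; exact: (mart i.+1).1.
- by apply: (integrableS measurableT) => //; exact: (mart i).1.
rewrite (mart i).2 // subee //.
apply: integrable_fin_num => //; apply: (integrableS measurableT) => //; exact: (mart i).1.
Qed.

Definition Aset i v := S' `&` [set x : T | pre i x = v].

Lemma Aset_meas i v : measurable (Aset i v).
Proof. exact: measurableI (pre_measurable _ _). Qed.

Definition tfun i v (x : T) : R := (\1_(Aset i v) x * Delta i x)%R.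

Lemma tfunE i v : (fun x => (tfun i v x)%:E) = (fun x => (Delta i x)%:E) \_ (Aset i v).
Proof.
apply/funext => x; rewrite /tfun patchE indicE; case: (x \in Aset i v) => /=.
  by rewrite mul1r.
by rewrite mul0r.
Qed.

Lemma tfun_int i v : Q.-integrable setT (fun x => (tfun i v x)%:E).
Proof.
rewrite tfunE -integrable_mkcond; last exact: Aset_meas.
apply: (integrableS measurableT) => //; [exact: Aset_meas|exact: Delta_int].
Qed.

Lemma tfun_int0 i v : \int[Q]_x (tfun i v x)%:E = 0.
Proof.
rewrite tfunE -integral_mkcond /Aset int_restrict //.
- apply: mart0; [exact: pre_filtr | exact: pre_measurable].
- exact: pre_measurable.
- exact: Delta_int.
Qed.


Definition Fi i := [set pre i x | x in S'].

Lemma Fi_fin i : finite_set (Fi i).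
Proof.
apply: (sub_finite_set _ (finite_image (fun N => pre i (xget point N)) (finS' i))).
move=> _ [x Sx <-]; exists (node i x); first by exists x.
have := @xgetPex _ point (node i x) (ex_intro _ x (fun k _ => erefl)).
set y := xget _ _ => Hy.
rewrite /pre /Defs.prefix; apply/eq_in_map => k.
rewrite mem_iota add0n => /andP[_ ki]; exact: Hy.
Qed.

Definition Fs i : seq (seq R) :=
  undup (proj1_sig (cid ((finite_seqP (Fi i)).1 (Fi_fin i)))).

Lemma Fs_mem i v : Fi i v -> v \in Fs i.
Proof.
rewrite /Fs; case: cid => s /= -> vs; by rewrite mem_undup.
Qed.

Definition W (P : sportfolio R) (x : T) : R :=
 (pV P * \1_S' x + \sum_(0 <= i < pn P) \sum_(v <- Fs i) ph P i v * tfun i v x)%R.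

Lemma W_in P x : S' x -> W P x = wealth_inf P (sval x).
Proof.
move=> Sx; rewrite /W /wealth_inf /wealth minnn indicE mem_set // mulr1; congr (_ + _)%R.
apply: eq_bigr => i _.
have vin : pre i x \in Fs i.
  by apply: Fs_mem; exists x.
rewrite (bigD1_seq (pre i x)) //=; last exact: undup_uniq.
rewrite big1 ?addr0; last first.
  move=> v vneq; rewrite /tfun indicE memNset ?mul0r ?mulr0 //.
  by move=> [_ /= eq]; rewrite eq eqxx in vneq.
by rewrite /tfun indicE mem_set ?mul1r //.
Qed.

Lemma W_out P x : ~ S' x -> W P x = 0%R.
Proof.
move=> nSx; rewrite /W indicE memNset // mulr0 add0r big1 // => i _.
by rewrite big1 // => v _; rewrite /tfun indicE memNset ?mul0r ?mulr0 //; case.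
Qed.

Lemma W_E P : (fun x => (W P x)%:E) = (fun x => (pV P)%:E * (\1_S' x)%:E +
   \sum_(0 <= i < pn P) \sum_(v <- Fs i) (ph P i v)%:E * (tfun i v x)%:E).
Proof.
apply/funext => x; rewrite /W EFinD EFinM -sumEFin; congr (_ + _).
by apply: eq_bigr => i _; rewrite -sumEFin; apply: eq_bigr => v _; rewrite EFinM.
Qed.

Lemma W_int1 P : Q.-integrable setT (fun x => (pV P)%:E * (\1_S' x)%:E).
Proof. by apply: integrableZl => //; exact: integrable_indic. Qed.

Lemma W_int2 P : Q.-integrable setT (fun x =>
   \sum_(0 <= i < pn P) \sum_(v <- Fs i) (ph P i v)%:E * (tfun i v x)%:E).
Proof.
apply: integrable_sum => // i _; apply: integrable_sum => // v _.
by apply: integrableZl => //; exact: tfun_int.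
Qed.

Lemma W_integrable P : Q.-integrable setT (fun x => (W P x)%:E).
Proof. by rewrite W_E; apply: integrableD => //; [exact: W_int1|exact: W_int2]. Qed.

Lemma W_integral P : \int[Q]_x (W P x)%:E = (pV P)%:E.
Proof.
rewrite W_E integralD //; [|exact: W_int1|exact: W_int2].
rewrite integralZl //; last exact: integrable_indic.
rewrite integral_indic // setIT.
rewrite [X in _ + X = _](_ : _ = 0); last first.
  rewrite integral_sum //; last first.
    move=> i; apply: integrable_sum => // v _.
    by apply: integrableZl => //; exact: tfun_int.
  rewrite big1 // => i _; rewrite integral_sum //; last first.
    by move=> v; apply: integrableZl => //; exact: tfun_int.
  by rewrite big1 // => v _; rewrite integralZl ?tfun_int0 ?mule0 //; exact: tfun_int.
by rewrite adde0 -[RHS]mule1; congr (_ * _); exact: QS'.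
Qed.


Section GenP.
Variable P : nat -> sportfolio R.
Hypothesis gP : gen_portfolio p P.

Lemma Wk_ge0 k x : (0 <= W (P k.+1) x)%R.
Proof.
have [Sx|nSx] := pselect (S' x).
  by rewrite W_in //; case: (gP k.+1 (ltn0Sn k)).
by rewrite W_out.
Qed.

Definition tailW x := \sum_(k <oo) (W (P k.+1) x)%:E.
Definition hP' x := (W (P 0%N) x)%:E + tailW x.
Definition hP x := if x \in S' then hP' x else +oo.

Lemma Wmeas k : measurable_fun setT (fun x => (W (P k) x)%:E).
Proof. exact: measurable_int (W_integrable (P k)). Qed.

Lemma tailW_meas : measurable_fun setT tailW.
Proof.
apply: (@ge0_emeasurable_sum _ _ _ setT (fun k x => (W (P k.+1) x)%:E) xpredT).
  by move=> k x _ _; rewrite lee_fin; exact: Wk_ge0.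
by move=> k _; exact: Wmeas.
Qed.

Lemma tailW_integral : \int[Q]_x tailW x = \sum_(k <oo) (pV (P k.+1))%:E.
Proof.
rewrite /tailW integral_nneseries //.
- by apply: eq_eseriesr => k _; rewrite W_integral.
- by move=> k; exact: Wmeas.
- by move=> k x _; rewrite lee_fin; exact: Wk_ge0.
Qed.

Hypothesis feP : endowment P \is a fin_num.

Lemma endowE : endowment P = (pV (P 0%N))%:E + \sum_(k <oo) (pV (P k.+1))%:E.
Proof.
rewrite /endowment eseries_shift //.
by move=> k; rewrite lee_fin; by case: (gP k.+1 (ltn0Sn k)).
Qed.

Lemma tail_fin : \sum_(k <oo) (pV (P k.+1))%:E \is a fin_num.
Proof. by move: feP; rewrite endowE fin_numD => /andP[]. Qed.

Lemma tailW_int : Q.-integrable setT tailW.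
Proof.
apply/integrableP; split; first exact: tailW_meas.
rewrite (eq_integral tailW); last first.
  move=> x _; rewrite gee0_abs //; apply: nneseries_ge0 => k *.
  by rewrite lee_fin; exact: Wk_ge0.
apply: (@le_lt_trans _ _ (\sum_(k <oo) (pV (P k.+1))%:E)).
  by rewrite -tailW_integral.
by rewrite ltey_eq tail_fin.
Qed.

Lemma hP'_int : Q.-integrable setT hP'.
Proof. by apply: integrableD => //; [exact: W_integrable|exact: tailW_int]. Qed.

Lemma hP'_integral : \int[Q]_x hP' x = endowment P.
Proof.
rewrite /hP' integralD //; [|exact: W_integrable|exact: tailW_int].
by rewrite W_integral // tailW_integral endowE.
Qed.

Lemma hP_meas : measurable_fun setT hP.
Proof.
apply: measurable_fun_ifT; first exact: measurable_mem_set.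
  exact: measurable_int hP'_int.
exact: measurable_cst.
Qed.

Lemma hP_ae : ae_eq Q setT hP hP'.
Proof.
exists (~` S'); split; [exact: measurableC | exact: QnS |].
by move=> x /= H Sx; apply: H => _; rewrite /hP mem_set.
Qed.

Lemma hP_integral : \int[Q]_x hP x = endowment P.
Proof.
rewrite -hP'_integral; apply: ae_eq_integral => //.
- exact: hP_meas.
- exact: measurable_int hP'_int.
- exact: hP_ae.
Qed.

Lemma hP_int : Q.-integrable setT hP.
Proof.
apply/integrableP; split; first exact: hP_meas.
rewrite (@ae_eq_integral _ _ _ Q setT (fun x => `|hP' x|)) //.
- by move/integrableP: hP'_int => [].
- by apply: measurableT_comp => //; exact: hP_meas.
- by apply: measurableT_comp => //; exact: measurable_int hP'_int.
- exists (~` S'); split; [exact: measurableC | exact: QnS |].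
  by move=> x /= H Sx; apply: H => _; rewrite /hP mem_set.
Qed.

Lemma hP_super x : \sum_(m <oo) (wealth_inf (P m) (sval x))%:E <= hP x.
Proof.
rewrite /hP; case: ifPn => [/set_mem Sx|_]; last exact: leey.
rewrite eseries_shift //.
  rewrite /hP' /tailW (W_in _ _ Sx); apply: leeD; first by [].
  apply: lee_nneseries => k *.
    by rewrite lee_fin; case: (gP k.+1 (ltn0Sn k)).
  by rewrite (W_in _ _ Sx).
by move=> k; rewrite lee_fin; case: (gP k.+1 (ltn0Sn k)).
Qed.

Lemma hP_key : exists h : T -> \bar R,
  [/\ measurable_fun setT h, Q.-integrable setT h,
   forall x, \sum_(m <oo) (wealth_inf (P m) (sval x))%:E <= h x &
   \int[Q]_x h x = endowment P].
Proof.
exists hP; split; [exact: hP_meas|exact: hP_int|exact: hP_super|exact: hP_integral].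
Qed.

End GenP.
End Port.

Section Transfer.
Local Open Scope ereal_scope.
Context d (U : measurableType d) (R : realType) (mu : measure U R).
Local Notation I := (caratheodory_type (mu^*)%mu).
Local Notation mub := (completed_measure_extension (mu:=mu)).

Lemma id_meas : measurable_fun (setT : set I) (fun x : I => (x : U)).
Proof. move=> _ B mB; rewrite setTI; exact: caratheodory_measurable_mu_ext. Qed.

Lemma tr_measurable (h : U -> \bar R) : measurable_fun setT h ->
  measurable_fun (setT : set I) (h : I -> \bar R).
Proof. move=> mh; exact: (measurableT_comp mh id_meas). Qed.

Lemma tr_ge0 (h : U -> \bar R) : measurable_fun setT h -> (forall x, 0 <= h x) ->
  \int[mub]_x (h : I -> \bar R) x = \int[mu]_x h x.
Proof.
move=> mh h0.
have E : \int[mu]_x h x = \int[pushforward mub (fun x : I => (x : U))]_x h x.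
  apply: eq_measure_integral; first exact: id_meas.
  move=> H0 A mA _; rewrite /= /pushforward /=.
  by rewrite -[X in _ = X]/((mu^*)%mu A) measurable_mu_extE.
rewrite E ge0_integral_pushforward //; first exact: id_meas.
Qed.

Lemma tr_integral (h : U -> \bar R) : measurable_fun setT h ->
  \int[mub]_x (h : I -> \bar R) x = \int[mu]_x h x.
Proof.
move=> mh; rewrite [LHS]integralE [RHS]integralE; congr (_ - _); apply: tr_ge0.
- exact: measurable_funepos.
- by move=> x; exact: funepos_ge0.
- exact: measurable_funeneg.
- by move=> x; exact: funeneg_ge0.
Qed.

Lemma tr_null (N : set U) : measurable N -> mu N = 0 ->
  measurable (N : set I) /\ mub N = 0.
Proof.
move=> mN N0; split; first exact: caratheodory_measurable_mu_ext.
by rewrite /completed_measure_extension /= measurable_mu_extE.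
Qed.

Lemma tr_integrable (h : U -> \bar R) : mu.-integrable setT h ->
  mub.-integrable setT (h : I -> \bar R).
Proof.
move=> /integrableP[mh hlt]; apply/integrableP; split; first exact: tr_measurable.
rewrite (@tr_ge0 (fun x => `|h x|)) //.
exact: measurableT_comp.
Qed.

End Transfer.

Lemma abs_aux (R : realType) (r s t u : R) :
  (r <= s)%R -> (s <= t)%R -> (- r <= u)%R -> (`|s| <= `|t| + `|u|)%R.
Proof.
move=> rs st ru; rewrite ler_norml; apply/andP; split.
  have := ler_norm u; have := normr_ge0 t; move=> h1 h2; lra.
have := ler_norm t; have := normr_ge0 u; move=> h1 h2; lra.
Qed.

Lemma ereal_absbound (R : realType) (r : R) (h a b : \bar R) :
  r%:E <= h -> h <= a -> (- r)%:E <= b -> `|h| <= `|a| + `|b|.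
Proof.
case: h => [s| |] //; case: a => [t| |] //; case: b => [u| |] //=;
  rewrite ?lee_fin => rs st ru.
- exact: abs_aux rs st ru.
- by rewrite addey // leey.
- by rewrite addye // leey.
- by rewrite addye // leey.
Qed.

Lemma ereal_sum0 (R : realType) (r : R) (a b : \bar R) :
  r%:E <= a -> (- r)%:E <= b -> a + b = 0 -> a = r%:E.
Proof.
case: a => [s| |] //; case: b => [u| |] //= rs ru; rewrite ?lee_fin in rs ru *.
move=> /eqP; rewrite -EFinD eqe => /eqP su; congr EFin; lra.
Qed.

Lemma ereal_eq3 (R : realType) (a b c : \bar R) :
  a \is a fin_num -> b \is a fin_num -> c \is a fin_num ->
  a + b = 0 -> a <= c -> b <= - c -> a = c.
Proof.
case: a => [a| |] //; case: b => [b| |] //; case: c => [c| |] // _ _ _.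
move=> /eqP; rewrite -EFinD eqe => /eqP ab; rewrite -EFinN !lee_fin => ac bc.
congr EFin; lra.
Qed.

Arguments ereal_absbound {R r h a b}.
Arguments ereal_sum0 {R r a b}.
Arguments ereal_eq3 {R a b c}.

Section Main.
Variables (R : realType) (S : set (nat -> R)) (p : {y | S y}).
Notation T := (Traj p).

Lemma keyQ (Q : probability T R) : M0 p Q -> forall P, gen_portfolio p P ->
  endowment P \is a fin_num -> exists h : T -> \bar R,
  [/\ measurable_fun setT h, Q.-integrable setT h,
   forall x, \sum_(m <oo) (wealth_inf (P m) (sval x))%:E <= h x &
   \int[Q]_x h x = endowment P].
Proof.
move=> [mart [S' [mS' [QS' finS']]]] P gP feP.
exact: (@hP_key R S p Q mart S' mS' QS' finS' P gP feP).
Qed.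

Lemma endow_ge P : gen_portfolio p P -> (pV (P 0%N))%:E <= endowment P.
Proof.
move=> gP; rewrite /endowment eseries_shift //.
- rewrite leeDl // nneseries_ge0 // => k _; rewrite lee_fin.
  by case: (gP k.+1 (ltn0Sn k)).
- by move=> k; rewrite lee_fin; case: (gP k.+1 (ltn0Sn k)).
Qed.

Lemma endow_fin P : gen_portfolio p P -> endowment P < +oo ->
  endowment P \is a fin_num.
Proof.
move=> gP lt; rewrite fin_numE; apply/andP; split; last by rewrite lt_eqF.
by apply/negP => /eqP Ey; have := endow_ge _ gP; rewrite Ey leeNy_eq.
Qed.

End Main.

Section Main2.
Variables (R : realType) (S : set (nat -> R)) (p : {y | S y}).
Notation T := (Traj p).

Lemma EQstar_le (Q : probability T R) (HQ : M0 p Q) (f : T -> \bar R) P :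
  gen_portfolio p P -> superhedges P f -> EQstar Q f <= endowment P.
Proof.
move=> gP sh.
have [fe|nfe] := boolP (endowment P \is a fin_num); last first.
  have -> : endowment P = +oo.
    move: nfe; rewrite fin_numE negb_and !negbK => /orP[/eqP Ey|/eqP -> //].
    by have := @endow_ge _ _ _ _ gP; rewrite Ey leeNy_eq.
  exact: leey.
have [h [mh ih hsup hint]] := @keyQ _ _ _ _ HQ _ gP fe.
apply: (@le_trans _ _ (EQ Q h)).
  apply: ereal_inf_lbound; exists h => //; split; last split.
  - exact: tr_measurable.
  - by move=> x; exact: le_trans (sh x) (hsup x).
  - rewrite /EQ_exists /cexpect_exists => -[+ _].
    rewrite tr_ge0; [|exact: measurable_funepos|by move=> x; exact: funepos_ge0].
    have := integrable_fin_num measurableT (integrable_funepos measurableT ih).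
    by move=> /[swap] ->.
by rewrite /EQ /cexpect tr_integral // -hint.
Qed.

Lemma sup_le (f : T -> \bar R) :
  ereal_sup [set EQstar Q f | Q in M0 p] <= sigmabar p f.
Proof.
apply/ereal_supP => _ [Q HQ <-].
apply/ereal_infP => _ [P [gP [sh ->]]]; exact: EQstar_le.
Qed.

Lemma sig_le_norm (f : T -> \bar R) : sigmabar p f <= knorm p f.
Proof.
apply: le_ereal_inf => _ [P [[gP _] [sh ->]]]; exists P; split => //; split => // x.
by apply: le_trans (sh x); exact: lee_abs.
Qed.

Lemma sig0 : M0 p !=set0 -> 0 <= sigmabar p (fun _ => 0).
Proof.
move=> [Q HQ]; apply: le_trans (sup_le _).
apply: ereal_sup_ge; exists (EQstar Q (fun _ => 0)); first by exists Q.
apply/ereal_infP => _ [h [_ [h0 _]] <-].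
by rewrite /EQ /cexpect; apply: integral_ge0 => x _; exact: h0.
Qed.

End Main2.

Section Main3.
Variables (R : realType) (S : set (nat -> R)) (p : {y | S y}).
Notation T := (Traj p).
Variable Q : probability T R.
Hypothesis HQ : M0 p Q.

Lemma approx (g : T -> R) : sigmabar p (fun x => (g x)%:E) \is a fin_num ->
  forall n : nat, exists h : T -> \bar R,
  [/\ measurable_fun setT h, Q.-integrable setT h, (forall x, (g x)%:E <= h x) &
   \int[Q]_x h x <= sigmabar p (fun x => (g x)%:E) + (n.+1%:R^-1)%:E].
Proof.
move=> fin n.
have e0 : (0 < n.+1%:R^-1 :> R)%R by rewrite invr_gt0 ltr0n.
have [_ [P [gP [sh ->]]] lt] := lb_ereal_inf_adherent e0 fin.
have fe : endowment P \is a fin_num.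
  apply: (@endow_fin _ _ _ _ gP); apply: lt_trans lt _.
  by rewrite ltey_eq fin_numD fin.
have [h [mh ih hsup hint]] := @keyQ _ _ _ _ HQ _ gP fe.
exists h; split => //.
  by move=> x; exact: le_trans (sh x) (hsup x).
by rewrite -hint in lt; exact: ltW.
Qed.

Lemma L1K_part (f : T -> R) : L1K p f ->
  L1Q Q f /\ intK p f = EQ Q (fun x => (f x)%:E).
Proof.
move=> [Hneg Hfin].
set c := sigmabar p (fun x => (f x)%:E) in Hneg Hfin *.
have Hfin' : sigmabar p (fun x => (- f x)%:E) \is a fin_num.
  by rewrite -fin_numN Hneg.
have Hneg' : sigmabar p (fun x => (- f x)%:E) = - c by rewrite -Hneg oppeK.
have [hs Hhs] := choice (approx _ Hfin).
have [ks Hks] := choice (approx (fun x => - f x)%R Hfin').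
pose H x := einfs (fun n => hs n x) 0%N.
pose K x := einfs (fun n => ks n x) 0%N.
have Hle n x : H x <= hs n x by apply: ereal_inf_lbound; exists n.
have Kle n x : K x <= ks n x by apply: ereal_inf_lbound; exists n.
have Hge x : (f x)%:E <= H x.
  by apply/ereal_infP => _ [n _ <-]; case: (Hhs n).
have Kge x : (- f x)%:E <= K x.
  by apply/ereal_infP => _ [n _ <-]; case: (Hks n).
have mH : measurable_fun setT H.
  by apply: measurable_fun_einfs => n; case: (Hhs n).
have mK : measurable_fun setT K.
  by apply: measurable_fun_einfs => n; case: (Hks n).
have ihs n : Q.-integrable setT (hs n) by case: (Hhs n).
have iks n : Q.-integrable setT (ks n) by case: (Hks n).
have iH : Q.-integrable setT H.
  apply: (@le_integrable _ _ _ Q setT measurableT H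
    (fun x => `|hs 0%N x| + `|ks 0%N x|) mH).
    move=> x _; rewrite [X in _ <= X]gee0_abs ?adde_ge0 //.
    apply: (ereal_absbound (Hge x) (Hle 0%N x)).
    exact: le_trans (Kge x) (Kle 0%N x).
  by apply: integrableD => //; apply: integrable_abse.
have iK : Q.-integrable setT K.
  apply: (@le_integrable _ _ _ Q setT measurableT K
    (fun x => `|ks 0%N x| + `|hs 0%N x|) mK).
    move=> x _; rewrite [X in _ <= X]gee0_abs ?adde_ge0 //.
    apply: (ereal_absbound (Kge x) (Kle 0%N x)).
    rewrite opprK; exact: le_trans (Hge x) (Hle 0%N x).
  by apply: integrableD => //; apply: integrable_abse.
have intH : \int[Q]_x H x <= c.
  apply/lee_addgt0Pr => e e0.
  have [N _ HN] := near_infty_natSinv_lt (PosNum e0).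
  apply: le_trans (le_integral measurableT iH (ihs N) (fun x _ => Hle N x)) _.
  case: (Hhs N) => _ _ _ hN; apply: le_trans hN _.
  by rewrite leeD2l // lee_fin; apply: ltW; exact: HN N (leqnn N).
have intK : \int[Q]_x K x <= - c.
  apply/lee_addgt0Pr => e e0.
  have [N _ HN] := near_infty_natSinv_lt (PosNum e0).
  apply: le_trans (le_integral measurableT iK (iks N) (fun x _ => Kle N x)) _.
  case: (Hks N) => _ _ _ hN; apply: le_trans hN _; rewrite Hneg'.
  rewrite leeD2l ?fin_numN // lee_fin; apply: ltW; exact: HN N (leqnn N).
have HK0 x : 0 <= H x + K x.
  by have := leeD (Hge x) (Kge x); rewrite -EFinD subrr.
have iHK : Q.-integrable setT (fun x => H x + K x) by exact: integrableD.
have int0 : \int[Q]_x (H x + K x) = 0.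
  apply/eqP; rewrite eq_le integral_ge0 ?andbT; last by move=> x _; exact: HK0.
  rewrite integralD //; apply: le_trans (leeD intH intK) _.
  by rewrite subee.
have cH : \int[Q]_x H x = c.
  apply: (ereal_eq3 (integrable_fin_num measurableT iH)
    (integrable_fin_num measurableT iK) Hfin _ intH intK).
  by rewrite -integralD.
have Habs : \int[Q]_x `|H x + K x| = 0.
  rewrite -int0; apply: eq_integral => x _; rewrite gee0_abs //; exact: HK0.
have [N [mN N0 subN]] := (ae_eq_integral_abs Q measurableT (measurable_int Q iHK)).1 Habs.
have HfN x : ~ N x -> H x = (f x)%:E.
  move=> nNx; apply: (ereal_sum0 (Hge x) (Kge x)).
  apply: contrapT => hk; apply: nNx; apply: subN => /= /(_ I); exact: hk.
pose I := caratheodory_type (Q^*)%mu.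
pose mub := completed_measure_extension (mu:=Q).
have [mNI N0I] := @tr_null _ _ _ Q N mN N0.
have aeHf : ae_eq mub (setT : set I) (H : I -> \bar R) (fun x : I => (f x)%:E).
  exists N; split => //.
  move=> x /= Hx; apply: contrapT => nNx; apply: Hx => _; exact: HfN x nNx.
have mHI : measurable_fun (setT : set I) (H : I -> \bar R) := @tr_measurable _ _ _ Q H mH.
have mfE : measurable_fun (setT : set I) (fun x : I => (f x)%:E).
  have cmub : measure_is_complete mub.
    by move=> B HB; exact: measure_is_complete_caratheodory HB.
  exact: (ae_measurable_fun cmub aeHf mHI).
split.
  rewrite /L1Q /cintegrable; apply/integrableP; split; first exact: mfE.
  rewrite (@ae_eq_integral _ _ _ mub setT (fun x : I => `|H x|)
    (fun x : I => `|(f x)%:E|)).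
  - rewrite (@tr_ge0 _ _ _ Q (fun x => `|H x|)).
    + by case/integrableP: iH.
    + exact: measurableT_comp.
    + by move=> x; exact: abse_ge0.
  - exact: measurableT.
  - exact: measurableT_comp.
  - exact: measurableT_comp.
  - exists N; split => //.
    move=> x /= Hx; apply: contrapT => nNx; apply: Hx => _; by rewrite HfN.
rewrite /Defs.intK -/c -cH -(@tr_integral _ _ _ Q H mH) /EQ /cexpect.
apply: (@ae_eq_integral _ _ _ mub setT (fun x : I => (f x)%:E) (H : I -> \bar R)).
- exact: measurableT.
- exact: mHI.
- exact: mfE.
- exact: aeHf.
Qed.

End Main3.

Theorem theorem6p2 (R : realType) (s0 : R) (S : set (nat -> R))
  (HS : forall x, S x -> x 0%N = s0) (p : {y | S y}) :
  M0 p !=set0 ->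
  0 <= sigmabar p (fun _ => 0) /\
  (forall f : Traj p -> \bar R,
     ereal_sup [set EQstar Q f | Q in M0 p] <= sigmabar p f /\
     sigmabar p f <= knorm p f) /\
  (forall Q, M0 p Q ->
     L1K p `<=` L1Q Q /\
     (forall f, L1K p f -> intK p f = EQ Q (fun x => (f x)%:E))).
Proof.
move=> HM; split; first exact: sig0.
split.
  by move=> f; split; [exact: sup_le | exact: sig_le_norm].
move=> Q HQ; split.
  by move=> f Hf; exact: (proj1 (@L1K_part _ _ _ Q HQ f Hf)).
by move=> f Hf; exact: (proj2 (@L1K_part _ _ _ Q HQ f Hf)).
Qed.
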